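(* Let $N$ be a positive integer, $\alpha>1$, and suppose $(L_1,\ldots,L_K)\in\mathrm{TFF}(\alpha,N)$. Let $\tilde N=\sum_{i=1}^K L_i-N$ and $\tilde\alpha=\alpha/(\alpha-1)=\alpha N/\tilde N$. Then $(L_1,\ldots,L_K)\in\mathrm{TFF}(\tilde\alpha,\tilde N)$.
   Context: For a positive integer $N$, $\mathrm{TFF}(\alpha,N)$ is the set of weakly decreasing sequences of positive integers $(L_1,\ldots,L_K)$ such that there exist orthogonal projections $P_1,\ldots,P_K$ on $\mathbb{R}^N$ with $\operatorname{rank}P_i=L_i$ and $\sum_{i=1}^K P_i=\alpha\mathbf I$ (necessarily $\alpha=\sum_i L_i/N$). *)

(* Defs.v *)
From HB Require Import structures.
From mathcomp Require Import all_boot all_order all_algebra.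
From mathcomp Require Import reals.
Set Implicit Arguments. Unset Strict Implicit. Unset Printing Implicit Defensive.
Import Order.TTheory GRing.Theory Num.Theory.
Local Open Scope ring_scope.

Definition orth_proj (R : realType) (N : nat) (P : 'M[R]_N) : Prop :=
  P^T = P /\ P *m P = P.

Definition TFF (R : realType) (alpha : R) (N : nat) (L : seq nat) : Prop :=
  sorted geq L /\ all (fun l => 0 < l)%N L /\
  exists P : 'I_(size L) -> 'M[R]_N,
    (forall i : 'I_(size L), orth_proj (P i) /\ \rank (P i) = nth 0%N L i) /\
    \sum_(i < size L) P i = alpha%:M.

(* Main.v *)
Require Import Defs.
From HB Require Import structures.
From mathcomp Require Import all_boot all_order all_algebra.
From mathcomp Require Import reals ring.
Import Order.TTheory GRing.Theory Num.Theory.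
Local Open Scope ring_scope.

Set Implicit Arguments. Unset Strict Implicit. Unset Printing Implicit Defensive.

Lemma gs_exists (R : realType) n m (A : 'M[R]_(m, n)) :
  exists r (Q : 'M[R]_(r, n)), Q *m Q^T = 1%:M /\ (Q <= A)%MS /\ (A <= Q)%MS.
Proof.
elim: m A => [|m IH] A.
  exists 0%N, 0; split; first by rewrite [LHS]flatmx0 [RHS]flatmx0.
  by rewrite [A]flatmx0 !sub0mx.
suff H : forall A : 'M[R]_(1 + m, n), exists r (Q : 'M[R]_(r, n)),
    Q *m Q^T = 1%:M /\ (Q <= A)%MS /\ (A <= Q)%MS by exact: H A.
clear A => A.
rewrite -[A]vsubmxK; set a := usubmx A; set A' := dsubmx A.
have [r [Q' [HQ [s1 s2]]]] := IH A'.
pose w := a - a *m Q'^T *m Q'.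
have wQ : w *m Q'^T = 0.
  by rewrite /w mulmxBl -!mulmxA HQ mulmx1 subrr.
have aw : a = w + (a *m Q'^T) *m Q' by rewrite /w subrK.
have [w0|wn0] := eqVneq w 0.
  exists r, Q'; split => //; split.
    apply: (submx_trans s1); rewrite -(addsmxE a A'); exact: addsmxSr.
  rewrite col_mx_sub s2 andbT aw w0 add0r; exact: submxMl.
pose s := (w *m w^T) 0 0.
have s_gt0 : 0 < s.
  rewrite lt_def; apply/andP; split.
    apply/eqP => s0; move/eqP: wn0; apply; apply/rowP => j.
    have h : forall k, w 0 k ^+ 2 = 0.
      move=> k; apply: (@psumr_eq0P _ _ xpredT (fun k => w 0 k ^+ 2)) => //.
      - by move=> *; exact: sqr_ge0.
      - apply: etrans s0; rewrite /s mxE; apply: eq_bigr => l _; rewrite [w^T _ _]mxE expr2 //.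
    by rewrite [RHS]mxE; apply/eqP; rewrite -sqrf_eq0 h.
  rewrite /s mxE; apply: sumr_ge0 => k _; rewrite [w^T _ _]mxE -expr2 sqr_ge0 //.
pose u := (Num.sqrt s)^-1 *: w.
have sq0 : Num.sqrt s != 0 by rewrite sqrtr_eq0 -ltNge.
exists (1 + r)%N, (col_mx u Q'); split; [|split].
- rewrite tr_col_mx mul_col_row (scalar_mx_block 1 r 1).
  have uQ : u *m Q'^T = 0 by rewrite /u -scalemxAl wQ scaler0.
  have -> : Q' *m u^T = (u *m Q'^T)^T by rewrite trmx_mul trmxK.
  rewrite uQ HQ trmx0; congr block_mx.
  rewrite /u linearZ /= -scalemxAl -scalemxAr scalerA (mx11_scalar (w *m w^T)).
  rewrite -/s scale_scalar_mx; congr scalar_mx.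
  by rewrite -invfM -expr2 sqr_sqrtr ?ltW // mulVf // gt_eqF.
- rewrite col_mx_sub; apply/andP; split.
    apply: scalemx_sub; rewrite /w -addsmxE addmx_sub_adds //.
    by rewrite eqmx_opp; apply: submx_trans (submxMl _ _) (submx_trans s1 _).
  by rewrite (submx_trans s1) // -addsmxE addsmxSr.
- rewrite col_mx_sub; apply/andP; split; last first.
    apply: (submx_trans s2); rewrite -(addsmxE u Q'); exact: addsmxSr.
  rewrite aw -(addsmxE u Q') addmx_sub_adds //.
    have -> : w = Num.sqrt s *: u by rewrite /u scalerA divff // scale1r.
    by apply: scalemx_sub.
  exact: submxMl.
Qed.

Lemma orth_rows_rank (R : realType) r n (Q : 'M[R]_(r, n)) : Q *m Q^T = 1%:M -> \rank Q = r.
Proof.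
move=> HQ; apply/eqP; rewrite eqn_leq rank_leq_row /=.
by rewrite -{1}(mxrank1 R r) -HQ mxrankM_maxl.
Qed.

Lemma proj_factor (R : realType) n (P : 'M[R]_n) : P^T = P -> P *m P = P ->
  exists Q : 'M[R]_(\rank P, n), Q *m Q^T = 1%:M /\ Q^T *m Q = P.
Proof.
move=> PT PP; have [r [Q [HQ [s1 s2]]]] := gs_exists P.
have e : r = \rank P.
  by rewrite -(orth_rows_rank HQ); apply: eqmx_rank; rewrite s1 s2.
subst r; exists Q; split => //.
have [X eX] := submxP s1; have [Y eY] := submxP s2.
have QP : Q *m P = Q by rewrite eX -mulmxA PP.
have H1 : Q^T *m Q = P *m (Q^T *m Q) by rewrite -{1}QP trmx_mul PT mulmxA.
rewrite H1 [X in X *m (Q^T *m Q)]eY !mulmxA -(mulmxA Y) HQ mulmx1 -eY //.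
Qed.

Lemma proj_trace (R : realType) n (P : 'M[R]_n) : P^T = P -> P *m P = P ->
  \tr P = (\rank P)%:R.
Proof.
move=> PT PP; have [Q [HQ HP]] := proj_factor PT PP.
by rewrite -[X in \tr X]HP mxtrace_mulC HQ mxtrace1.
Qed.

Lemma naimark (R : realType) (K N : nat) (p_ : 'I_K -> nat) (alpha : R) (P : 'I_K -> 'M[R]_N) :
  1 < alpha ->
  (forall i, (P i)^T = P i /\ P i *m P i = P i /\ \rank (P i) = p_ i) ->
  \sum_i P i = alpha%:M ->
  exists P' : 'I_K -> 'M[R]_((\sum_i p_ i) - N)%N,
    (forall i, (P' i)^T = P' i /\ P' i *m P' i = P' i /\ \rank (P' i) = p_ i)
    /\ \sum_i P' i = (alpha / (alpha - 1))%:M.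
Proof.
move=> a1 HP sumP.
have a0 : alpha != 0 by rewrite gt_eqF // (lt_trans ltr01).
have a10 : alpha - 1 != 0 by rewrite subr_eq0 gt_eqF.
have hQ : forall i, exists Q : 'M[R]_(p_ i, N),
    (Q *m Q^T == 1%:M) && (Q^T *m Q == P i).
  move=> i; have [PT [PP rk]] := HP i; rewrite -rk.
  by have [Q [H1 H2]] := proj_factor PT PP; exists Q; rewrite H1 H2 !eqxx.
pose Q i := xchoose (hQ i).
have QQ i : Q i *m (Q i)^T = 1%:M by have /andP[/eqP -> _] := xchooseP (hQ i).
have QP i : (Q i)^T *m Q i = P i by have /andP[_ /eqP ->] := xchooseP (hQ i).
pose S := (\sum_i p_ i)%N.
pose A : 'M[R]_(S, N) := \mxcol_i Q i.
pose c (i j : 'I_K) : R := (j == i)%:R.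
pose E i : 'M[R]_S := \mxdiag_j ((c i j)%:M : 'M[R]_(p_ j)).
have F1 : A^T *m A = alpha%:M.
  by rewrite tr_mxcol mul_mxrow_mxcol -sumP; apply: eq_bigr => i _; rewrite QP.
have F2 : \sum_i E i = 1%:M.
  rewrite /E -mxdiag_sum -(mxdiagZ (p_ := p_) 1); apply: eq_mxdiag => j.
  rewrite (bigD1 j) //= big1 ?addr0 /c ?eqxx //.
  by move=> i ne; rewrite eq_sym (negbTE ne) raddf0.
have F3 i : (E i)^T = E i.
  by rewrite tr_mxdiag; apply: eq_mxdiag => j; rewrite tr_scalar_mx.
have F4 i : E i *m A = \mxcol_j (c i j *: Q j).
  by rewrite mul_mxdiag_mxcol; apply: eq_mxcol => j; rewrite mul_scalar_mx.
have F5 i : A^T *m (E i *m A) = P i.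
  rewrite F4 /A tr_mxcol mul_mxrow_mxcol (bigD1 i) //= big1.
    by rewrite -scalemxAr QP /c eqxx scale1r addr0.
  by move=> j ne; rewrite -scalemxAr /c (negbTE ne) scale0r.
have F6 i : (E i *m A) *m (E i *m A)^T = E i.
  rewrite F4 tr_mxcol mul_mxcol_mxrow /E /mxdiag; apply: eq_mxblock => j k.
  rewrite linearZ /= -scalemxAl -scalemxAr scalerA.
  case: (eqVneq j k) => [<-|ne].
    by rewrite conform_mx_id QQ scalemx1 /c; case: eqP; rewrite ?mul1r ?mul0r.
  rewrite /c; case: (eqVneq j i) => [ji|ji]; last by rewrite mul0r scale0r.
  by subst j; rewrite eq_sym (negbTE ne) mulr0 scale0r.
have F7 i : E i *m E i = E i.
  rewrite /E [X in _ *m X]/mxdiag mul_mxdiag_mxblock /mxdiag.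
  apply: eq_mxblock => j k; case: (eqVneq j k) => [<-|ne]; rewrite ?mulmx0 //.
  by rewrite conform_mx_id -scalar_mxM /c; case: eqP; rewrite ?mul1r ?mul0r.
have F8 i : \tr (E i) = (p_ i)%:R.
  rewrite mxtrace_mxdiag (bigD1 i) //= big1 ?addr0.
    by rewrite mxtrace_scalar /c eqxx.
  by move=> j ne; rewrite mxtrace_scalar /c (negbTE ne) mul0rn.
pose G := alpha^-1 *: (A *m A^T).
pose F := 1%:M - G.
have GT : G^T = G by rewrite /G linearZ /= trmx_mul trmxK.
have GG : G *m G = G.
  rewrite /G -scalemxAl -scalemxAr scalerA -mulmxA (mulmxA A^T) F1.
  by rewrite mul_scalar_mx -scalemxAr scalerA -mulrA mulVf // mulr1.
have FT : F^T = F by rewrite /F linearB /= tr_scalar_mx GT.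
have FF : F *m F = F.
  by rewrite /F !mulmxBl !mul1mx mulmxBr mulmx1 GG subrr subr0.
have trF : \tr F = S%:R - N%:R.
  rewrite /F linearB /= mxtrace1 mxtraceZ mxtrace_mulC F1 mxtrace_scalar.
  by rewrite mulrnAr mulVf.
have [B [BB BF]] := proj_factor FT FF.
have rkF : (\rank F + N)%N = S.
  by apply/eqP; rewrite -(eqr_nat R) natrD -proj_trace // trF subrK.
have e : \rank F = (S - N)%N.
  apply/eqP; rewrite -(eqn_add2r N) subnK; first by rewrite rkF.
  by rewrite -rkF leq_addl.
move: (\rank F) e B BB BF => d -> B BB BF.
pose cc := alpha / (alpha - 1).
have Hc : cc * (1 - alpha^-1) = 1.
  by rewrite /cc; field; rewrite a10 a0.
have EAAE i : E i *m (A *m A^T) *m E i = E i.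
  by rewrite -[RHS](F6 i) trmx_mul F3 !mulmxA.
have EFE i : E i *m F *m E i = (1 - alpha^-1) *: E i.
  rewrite /F mulmxBr mulmxBl mulmx1 F7 /G -scalemxAr -scalemxAl EAAE.
  by rewrite scalerBl scale1r.
exists (fun i => cc *: (B *m E i *m B^T)); split; last first.
  rewrite -scaler_sumr -mulmx_suml -mulmx_sumr F2 mulmx1 BB scalemx1 //.
move=> i; set X := B *m E i *m B^T.
have XT : X^T = X by rewrite /X !trmx_mul trmxK F3 mulmxA.
have XX : X *m X = (1 - alpha^-1) *: X.
  have -> : X *m X = B *m (E i *m F *m E i) *m B^T by rewrite /X -BF !mulmxA.
  by rewrite EFE -scalemxAr -scalemxAl.
have P'T : (cc *: X)^T = cc *: X by rewrite linearZ /= XT.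
have P'P : (cc *: X) *m (cc *: X) = cc *: X.
  by rewrite -scalemxAl -scalemxAr XX !scalerA -mulrA Hc mulr1.
split => //; split => //.
apply/eqP; rewrite -(eqr_nat R) -proj_trace // mxtraceZ /X.
rewrite mxtrace_mulC mulmxA BF /F mulmxBl mul1mx linearB /= F8 /G -scalemxAl.
rewrite mxtraceZ -mulmxA mxtrace_mulC -mulmxA F5.
have [PT [PP rk]] := HP i; rewrite proj_trace // rk.
by rewrite -{1}(mul1r (p_ i)%:R) -mulrBl mulrA Hc mul1r.
Qed.

Theorem theorem2p6 (R : realType) (N : nat) (alpha : R) (L : seq nat) :
  (0 < N)%N -> 1 < alpha -> TFF alpha N L ->
  TFF (alpha / (alpha - 1)) (sumn L - N)%N L.
Proof.
move=> N0 a1 [srt [pos [P [HP sumP]]]]; split => //; split => //.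
have HP' : forall i, (P i)^T = P i /\ P i *m P i = P i /\
    \rank (P i) = (fun i : 'I_(size L) => nth 0%N L i) i.
  by move=> i; have [[? ?] ?] := HP i.
have [P' [H1 H2]] := naimark a1 HP' sumP.
have eS : (\sum_(i < size L) nth 0%N L i)%N = sumn L.
  by rewrite sumnE (big_nth 0%N) big_mkord.
move: P' H1 H2; rewrite eS => P' H1 H2.
exists P'; split => // i; have [? [? ?]] := H1 i; split => //.
Qed.
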